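(* Let $\mathbf{X}$ be a Banach space and $\mathcal{S}\subset\mathbf{X}$. If $\mathbb{P}$ is a Borel probability measure on $\mathcal{S}$ of growth order $s_0\in[0,\infty)$, then for every $s>s_0$ and every codec $\mathcal{C}=((E_R,D_R))_{R\in\mathbb{N}}$ we have $\mathbb{P}^\ast(\mathcal{A}^s_{\mathcal{S},\mathbf{X}}(\mathcal{C}))=0$.
   Context: Let $(\mathbf{X},\|\cdot\|_{\mathbf{X}})$ be a real Banach space and $\mathcal{S}\subset\mathbf{X}$. A codec is a sequence $\mathcal{C}=((E_R,D_R))_{R\in\mathbb{N}}$ of maps $E_R:\mathcal{S}\to\{0,1\}^R$, $D_R:\{0,1\}^R\to\mathbf{X}$. For $s\ge0$, $\mathcal{A}^s_{\mathcal{S},\mathbf{X}}(\mathcal{C})=\{\mathbf{x}\in\mathcal{S}:\sup_{R\in\mathbb{N}}R^s\|\mathbf{x}-D_R(E_R(\mathbf{x}))\|_{\mathbf{X}}<\infty\}$. $\mathcal{S}$ carries the trace of the Borel $\sigma$-algebra of $\mathbf{X}$; $\mathbb{P}^\ast$ is the induced outer measure $\mathbb{P}^\ast(M)=\inf\{\sum_n\mathbb{P}(M_n):M_n\text{ measurable},M\subset\bigcup_nM_n\}$. $\mathbb{P}$ has (logarithmic) growth order $s_0$ w.r.t. $\mathbf{X}$ if for every $s>s_0$ there exist $\varepsilon_0,c>0$ with $\mathbb{P}(\mathcal{S}\cap\mathcal{B}(\mathbf{x},\varepsilon;\mathbf{X}))\le2^{-c\varepsilon^{-1/s}}$ for all $\mathbf{x}\in\mathbf{X}$,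 $\varepsilon\in(0,\varepsilon_0)$, where $\mathcal{B}(\mathbf{x},\varepsilon;\mathbf{X})$ is the closed ball. *)

(* Defs.v *)
From HB Require Import structures.
From mathcomp Require Import all_boot all_order all_algebra.
From mathcomp Require Import all_classical all_reals all_analysis.
Set Implicit Arguments. Unset Strict Implicit. Unset Printing Implicit Defensive.
Import Order.TTheory GRing.Theory Num.Theory.
Import numFieldNormedType.Exports.
Local Open Scope classical_set_scope.
Local Open Scope ring_scope.

Section Trace.
Variables (R : realType) (X : normedModType R) (S : set X) (x0 : X) (hx0 : S x0).

Definition subS_of (h : S x0) := {x : X | S x}.
Definition subS := subS_of hx0.
HB.instance Definition _ := gen_eqMixin subS.
HB.instance Definition _ := gen_choiceMixin subS.
HB.instance Definition _ := isPointed.Build subS (exist _ x0 hx0).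

Definition borelX : set (set X) := <<s (@open X) >>.

Definition trace_sets : set (set subS) :=
  [set A | exists B, borelX B /\ A = (@proj1_sig X S) @^-1` B].

(* S equipped with the trace sigma-algebra (generated by trace_sets, which is
   already a sigma-algebra, so the generation does not add sets). *)
Definition traceS := g_sigma_algebraType trace_sets.

Definition induced_outer_measure (P : set traceS -> \bar R) (M : set traceS) : \bar R :=
  ereal_inf [set (\sum_(n <oo) P (F n))%E | F in
    [set F : nat -> set traceS | (forall n, measurable (F n)) /\
                                 M `<=` \bigcup_n F n]].

Definition growth_order (P : set traceS -> \bar R) (s0 : R) : Prop :=
  forall s : R, s0 < s ->
    exists eps0 c : R, 0 < eps0 /\ 0 < c /\
      forall (x : X) (eps : R), 0 < eps -> eps < eps0 ->
        (P ((@proj1_sig X S) @^-1` closed_ball_ (@Num.norm _ X) x eps)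
          <= ((2 : R) `^ (- (c * eps `^ (- s^-1))))%:E)%E.

Record codec := Codec {
  enc : forall n : nat, subS -> n.-tuple bool;
  dec : forall n : nat, n.-tuple bool -> X }.

Definition approx_class (C : codec) (s : R) : set traceS :=
  [set x | exists M : R, forall n : nat, (0 < n)%N ->
     (n%:R `^ s) * `|(proj1_sig (x : subS)) - @dec C n (@enc C n x)| <= M].

End Trace.

Arguments subS_of {R X} S x0 h.
Arguments subS {R X} S {x0} hx0.
Arguments traceS {R X} S {x0} hx0.
Arguments codec {R X} S {x0} hx0.
Arguments induced_outer_measure {R X S x0 hx0} P M.
Arguments growth_order {R X S x0 hx0} P s0.
Arguments approx_class {R X S x0 hx0} C s.

(* Main.v *)
Require Import Defs.
From HB Require Import structures.
From mathcomp Require Import all_boot all_order all_algebra.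
From mathcomp Require Import all_classical all_reals all_analysis.
From mathcomp Require Import lra.
Import Order.TTheory GRing.Theory Num.Theory.
Import numFieldNormedType.Exports.
Local Open Scope classical_set_scope.
Local Open Scope ring_scope.
Section Real.
Variable R : realType.

Lemma powge (p y N : R) : 0 < p -> 0 <= y -> 0 <= N -> y `^ p^-1 <= N -> y <= N `^ p.
Proof.
move=> p0 y0 N0 h.
have -> : y = (y `^ p^-1) `^ p by rewrite -powRrM mulVf ?gt_eqF // powRr1.
apply: ge0_ler_powR => //; first exact: ltW.
by rewrite nnegrE powR_ge0.
Qed.

Lemma key (c t s M eps0 d : R) : 0 < c -> 0 < t -> t < s -> 0 < M -> 0 < eps0 -> 0 < d ->
 exists n : nat, (0 < n)%N /\ M * n%:R `^ (-s) < eps0 /\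
   (2 ^ n)%:R * 2 `^ (- (c * (M * n%:R `^ (-s)) `^ (- t^-1))) <= d.
Proof.
move=> c0 t0 ts M0 e0 d0.
have s0 : 0 < s by apply: lt_trans ts.
set a := s / t.
have a1 : 1 < a by rewrite /a ltr_pdivlMr // mul1r.
set b := c * M `^ (- t^-1).
have b0 : 0 < b by rewrite mulr_gt0 // powR_gt0.
set K := Num.max 1 (Num.max ((2 * M / eps0) `^ s^-1)
           (Num.max ((2 / b) `^ (a - 1)^-1) d^-1)).
have K0 : 0 <= K by rewrite le_max ler01.
have := archi_boundP K0; set n := Num.Def.archi_bound K => Kn.
exists n.
have Kle : forall x, x <= K -> x < n%:R by move=> x xK; apply: le_lt_trans Kn.
have n1 : 1 < n%:R :> R by apply: Kle; rewrite le_max lexx.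
have N0 : 0 < n%:R :> R by apply: lt_trans n1.
split; first by rewrite -(ltr0n R).
have hs : 2 * M / eps0 <= n%:R `^ s.
  apply: powge => //; first by rewrite divr_ge0 // ?mulr_ge0 ?ltW.
  by apply: ltW; apply: Kle; rewrite !le_max lexx orbT.
have hb : 2 / b <= n%:R `^ (a - 1).
  apply: powge; first by rewrite subr_gt0.
  - by rewrite divr_ge0 // ltW.
  - exact: ltW.
  by apply: ltW; apply: Kle; rewrite !le_max lexx !orbT.
have hd : d^-1 < n%:R by apply: Kle; rewrite !le_max lexx !orbT.
have ns0 : 0 < n%:R `^ s by rewrite powR_gt0.
split.
  rewrite powRN ltr_pdivrMr // mulrC.
  rewrite ler_pdivrMr // in hs.
  apply: lt_le_trans hs; lra.
have -> : (M * n%:R `^ (- s)) `^ (- t^-1) = M `^ (- t^-1) * n%:R `^ a.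
  rewrite powRM ?powR_ge0 ?ltW // -powRrM; congr (_ * _); congr (_ `^ _).
  by rewrite mulrNN.
have hx : 2 * n%:R <= c * (M `^ (- t^-1) * n%:R `^ a).
  rewrite mulrA -/b -mulr_powRB1; last by apply: lt_trans a1.
    rewrite [2 * _]mulrC [b * _]mulrCA; apply: ler_wpM2l; first exact: ltW.
    apply: le_trans _ (ler_wpM2l (ltW b0) hb).
    by rewrite mulrCA mulfV ?lt0r_neq0 // mulr1.
  exact: ltW.
apply: (@le_trans _ _ ((2 ^ n)%:R * 2 `^ (- (2 * n%:R)))).
  rewrite ler_pM2l ?ltr0n ?expn_gt0 //.
  by apply: ler_powR; [rewrite ler1n | rewrite lerN2].
rewrite natrX -powR_mulrn // -powRD; last by rewrite pnatr_eq0 implybT.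
have -> : n%:R - 2 * n%:R = - n%:R :> R by lra.
rewrite powRN powR_mulrn //.
rewrite -(invrK d) lef_pV2 ?posrE ?exprn_gt0 ?invr_gt0 //.
apply: (le_trans (ltW hd)).
by rewrite -natrX ler_nat ltnW // ltn_expl.
Qed.
End Real.

Theorem proposition2p4 (R : realType) (X : completeNormedModType R) (S : set X)
  (x0 : X) (hx0 : S x0) (P : probability (traceS S hx0) R) (s0 : R) :
  0 <= s0 -> growth_order P s0 ->
  forall (s : R), s0 < s ->
  forall (C : codec S hx0), induced_outer_measure P (approx_class C s) = 0%E.
Proof.
move=> s00 hg s s0s C.
pose B (x : X) (r : R) : set (traceS S hx0) :=
  (@proj1_sig X S) @^-1` closed_ball_ (@Num.norm _ X) x r.
have mB : forall x r, measurable (B x r).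
  move=> x r; apply: sub_gen_smallest; exists (closed_ball_ (@Num.norm _ X) x r); split => //.
  rewrite /borelX -[closed_ball_ _ _ _]setCK; apply: sigma_algebraC.
  apply: sub_gen_smallest; apply: closed_openC; exact: closed_closed_ball_.
set t := (s0 + s) / 2.
have t0 : 0 < t by rewrite /t; lra.
have ts : t < s by rewrite /t; lra.
have [eps0 [c [e0 [c0 hP]]]] := hg t (ltac:(rewrite /t; lra)).
apply/eqP; rewrite eq_le; apply/andP; split; last first.
  apply/ereal_infP => y [F _ <-]; apply: nneseries_ge0 => n _ _; exact: measure_ge0.
apply/lee_addgt0Pr => e ep; rewrite add0e.
have : forall k : nat, exists n : nat, (0 < n)%N /\ k.+1%:R * n%:R `^ (-s) < eps0 /\
   (2 ^ n)%:R * 2 `^ (- (c * (k.+1%:R * n%:R `^ (-s)) `^ (- t^-1))) <= e / (2 ^ k.+1)%:R.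
  move=> k; apply: key => //.
  by rewrite divr_gt0 // ltr0n expn_gt0.
case/choice => N HN.
pose r k := k.+1%:R * (N k)%:R `^ (-s).
pose F k : set (traceS S hx0) := \bigcup_(cc in [set: (N k).-tuple bool]) B (dec C cc) (r k).
apply: ge_ereal_inf; exists (\sum_(k <oo) P (F k))%E.
  exists F => //; split.
    move=> k; apply: fin_bigcup_measurable; first exact: finite_finset.
    by move=> cc _; exact: mB.
  move=> x [M hM].
  have := archi_boundP (normr_ge0 M); set k := Num.Def.archi_bound `|M| => Mk.
  exists k => //; exists (enc C (N k) x) => //.
  rewrite /B /closed_ball_ /= distrC.
  have [Nk0 _] := HN k.
  have h := hM (N k) Nk0.
  have Ns0 : 0 < (N k)%:R `^ s :> R by rewrite powR_gt0 // ltr0n.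
  rewrite /r powRN ler_pdivlMr // mulrC.
  apply: (le_trans h); apply: (le_trans (ler_norm M)); apply: (le_trans (ltW Mk)).
  by rewrite ler_nat.
apply: le_trans (epsilon_trick0 xpredT (ltW ep)).
apply: lee_nneseries => [k _ _|k _]; first exact: measure_ge0.
have [Nk0 [rlt hb]] := HN k.
have r0 : 0 < r k by rewrite /r mulr_gt0 ?powR_gt0 ?ltr0n.
have mF : measurable (F k).
  apply: fin_bigcup_measurable; first exact: finite_finset.
  by move=> cc _; exact: mB.
apply: le_trans (@content_sub_fsum _ _ _ P _ [set: (N k).-tuple bool] (F k)
   (fun cc => B (dec C cc) (r k)) finite_finset _ mF _) _.
- by move=> cc _; exact: mB.
- by [].
apply: (@le_trans _ _ (\sum_(cc \in [set: (N k).-tuple bool]) (2 `^ (- (c * r k `^ (- t^-1))))%:E)%R).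
  apply: lee_fsum; first exact: finite_finset.
  by move=> cc _; apply: hP.
rewrite fsumEFin; last exact: finite_finset.
rewrite lee_fin (fsbigE (enum {: (N k).-tuple bool})) ?enum_uniq //.
- under eq_bigl do rewrite mem_setT.
  rewrite big_enum /= sumr_const card_tuple card_bool -[X in X <= _]mulr_natl.
  exact: hb.
- by move=> i; rewrite mem_enum.
Qed.
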